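(* Let $R$ be a supertropical semiring, $V$ a free $R$-module with base $(\varepsilon_i\mid i\in I)$, and $q:V\to R$ a quasilinear quadratic form (i.e. $q(x+y)=q(x)+q(y)$ for all $x,y\in V$). If $x\in V\setminus\{0\}$ is $q$-minimal, then $|\operatorname{supp}(x)|=1$ if $q(x)\in\mathcal T$, and $|\operatorname{supp}(x)|\le2$ if $q(x)\in\mathcal G$.
   Context: All semirings are commutative with $1$. A semiring $R$ is supertropical if $e:=1+1$ satisfies $e+e=e$ and, for all $x,y\in R$: if $ex\neq ey$ then $x+y\in\{x,y\}$, and if $ex=ey$ then $x+y=ey$. $\mathcal T=R\setminus eR$, $\mathcal G=eR\setminus\{0\}$. A quadratic form on an $R$-module $V$ is a map $q:V\to R$ with $q(ax)=a^2q(x)$ such that some symmetric bilinear $b$ satisfies $q(x+y)=q(x)+q(y)+b(x,y)$. Every $R$-module carries the minimal ordering $x\le y\iff\exists z:\ x+z=y$; $x<y$ means $x\le y$, $x\neq y$. A vector $x$ is $q$-minimal if there is no $x'<x$ with $q(x')=q(x)$. For $x=\sum_i x_i\varepsilon_i$, $\operatorname{supp}(x)=\{i: x_i\neq0\}$. *)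

(* Defs.v *)
From HB Require Import structures.
From mathcomp Require Import all_boot all_order all_algebra.
From Stdlib Require Import List.
Set Implicit Arguments. Unset Strict Implicit. Unset Printing Implicit Defensive.
Import GRing.Theory.
Local Open Scope ring_scope.

Section Defs.
Variable R : comPzSemiRingType.

Definition ee : R := 1 + 1.

Definition supertropical : Prop :=
  ee + ee = ee /\
  (forall x y : R, ee * x <> ee * y -> x + y = x \/ x + y = y) /\
  (forall x y : R, ee * x = ee * y -> x + y = ee * y).

Definition tangible (a : R) : Prop := ~ (exists r : R, a = ee * r).
Definition ghost_nz (a : R) : Prop := a <> 0 /\ exists r : R, a = ee * r.

(* The free R-module with base (eps_i | i in I) is modelled as the finitely
   supported functions I -> R (eps_i = indicator of i), with pointwise
   addition and scalar multiplication. *)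
Variable I : Type.

Definition finsupp (x : I -> R) : Prop :=
  exists s : list I, forall i, x i <> 0 -> List.In i s.

Definition vadd (x y : I -> R) : I -> R := fun i => x i + y i.
Definition vscale (a : R) (x : I -> R) : I -> R := fun i => a * x i.
Definition veq (x y : I -> R) : Prop := forall i, x i = y i.

Definition quadratic_form (q : (I -> R) -> R) : Prop :=
  (forall a x, finsupp x -> q (vscale a x) = a ^+ 2 * q x) /\
  exists b : (I -> R) -> (I -> R) -> R,
    (forall x y, finsupp x -> finsupp y -> b x y = b y x) /\
    (forall x y z, finsupp x -> finsupp y -> finsupp z ->
        b (vadd x y) z = b x z + b y z) /\
    (forall a x z, finsupp x -> finsupp z -> b (vscale a x) z = a * b x z) /\
    (forall x y, finsupp x -> finsupp y -> q (vadd x y) = q x + q y + b x y).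

Definition quasilinear (q : (I -> R) -> R) : Prop :=
  forall x y, finsupp x -> finsupp y -> q (vadd x y) = q x + q y.

Definition vle (x y : I -> R) : Prop :=
  exists z, finsupp z /\ veq (vadd x z) y.
Definition vlt (x y : I -> R) : Prop := vle x y /\ ~ veq x y.

Definition q_minimal (q : (I -> R) -> R) (x : I -> R) : Prop :=
  ~ (exists x', finsupp x' /\ vlt x' x /\ q x' = q x).

End Defs.

(* Main.v *)
Require Import Defs.
From HB Require Import structures.
From mathcomp Require Import all_boot all_order all_algebra.
From Stdlib Require Import List.
From Stdlib Require Import Classical ClassicalEpsilon FunctionalExtensionality Lia.
Local Open Scope ring_scope.
Import GRing.Theory.

Section Helpers.
Variable R : comPzSemiRingType.
Variable I : Type.

Definition rp (P : I -> Prop) (x : I -> R) : I -> R :=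
  fun j => if excluded_middle_informative (P j) then x j else 0.

Lemma rp_ext P Q x : (forall j, P j <-> Q j) -> rp P x = rp Q x.
Proof.
move=> H; apply: functional_extensionality => j; rewrite /rp.
case: excluded_middle_informative => a; case: excluded_middle_informative => b //.
- by exfalso; apply: b; apply/H.
- by exfalso; apply: a; apply/H.
Qed.

Lemma rp_split P Q x : (forall j, ~ (P j /\ Q j)) ->
  rp (fun j => P j \/ Q j) x = vadd (rp P x) (rp Q x).
Proof.
move=> H; apply: functional_extensionality => j; rewrite /rp /vadd.
case: excluded_middle_informative => a; case: excluded_middle_informative => b;
  case: excluded_middle_informative => c.
all: try by exfalso; apply: (H j).
all: try by rewrite ?addr0 ?add0r.
all: exfalso; tauto.
Qed.

Lemma rp_finsupp P x : finsupp x -> finsupp (rp P x).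
Proof.
move=> [s Hs]; exists s => i; rewrite /rp.
case: excluded_middle_informative => _ // /Hs //.
Qed.

Definition sumf (f : I -> R) (m : list I) : R :=
  fold_right (fun b acc => f b + acc) 0 m.

Variable q : (I -> R) -> R.
Hypothesis Hq : quadratic_form q.
Hypothesis Hql : quasilinear q.
Variable x : I -> R.
Hypothesis Hx : finsupp x.

Definition fs (b : I) : R := q (rp (fun j => j = b) x).

Lemma q_zero : q (rp (fun j => In j nil) x) = 0.
Proof.
have -> : rp (fun j => In j nil) x = vscale 0 x.
  by apply: functional_extensionality => j; rewrite /rp /vscale mul0r;
     case: excluded_middle_informative.
by case: Hq => -> // _; rewrite expr2 mul0r mul0r.
Qed.

Lemma q_sum m : NoDup m -> q (rp (fun j => In j m) x) = sumf fs m.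
Proof.
elim: m => [|a m IH] Hn; first by rewrite q_zero.
inversion Hn; subst.
rewrite /= -IH //.
have -> : rp (fun j => a = j \/ In j m) x = rp (fun j => j = a \/ In j m) x.
  by apply: rp_ext => j; split; case=> h; auto.
rewrite rp_split; last by move=> j [-> h].
rewrite Hql //; exact: rp_finsupp.
Qed.

Hypothesis Hst : supertropical R.

Lemma eeee : ee R * ee R = ee R.
Proof. by case: Hst => h _; rewrite {2}/ee mulrDr mulr1 h. Qed.

Lemma three (a b c : R) :
  a + (b + c) = a \/ a + (b + c) = a + b \/ a + (b + c) = a + c \/
  a + (b + c) = b + c.
Proof.
case: Hst => _ [H2 H3].
case: (classic (ee R * b = ee R * c)) => h.
- have E : b + c = ee R * c by apply: H3.
  case: (classic (ee R * a = ee R * (b + c))) => h2.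
  + right; right; right; rewrite (H3 _ _ h2) E mulrA eeee //.
  + case: (H2 _ _ h2) => ->; auto.
- case: (H2 _ _ h) => ->; auto.
Qed.

Lemma two_tang (a b : R) : tangible (a + b) -> a + b = a \/ a + b = b.
Proof.
case: Hst => _ [H2 H3] ht.
case: (classic (ee R * a = ee R * b)) => h.
- by exfalso; apply: ht; exists b; apply: H3.
- exact: H2.
Qed.

Lemma reduce (l : list I) : forall P : I -> Prop, (forall j, P j -> In j l) ->
  exists m, NoDup m /\ (length m <= 2)%coq_nat /\ (forall j, In j m -> P j) /\
    q (rp P x) = sumf fs m.
Proof.
elim: l => [|a l IH] P HP.
  exists nil; split; first constructor; split => /=; first by auto.
  split => //; rewrite -q_zero; congr q; apply: rp_ext => j; split => // /HP //.
have HP' : forall j, (j <> a /\ P j) -> In j l.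
  by move=> j [h1 /HP [h|//]]; exfalso; auto.
case: (IH _ HP') => m' [Hn [Hl [Hs Hq']]].
case: (classic (P a)) => Pa; last first.
  exists m'; split => //; split => //; split; first by move=> j /Hs [].
  rewrite -Hq'; congr q; apply: rp_ext => j; split; last by case.
  by move=> Pj; split => // E; subst.
have -> : rp P x = vadd (rp (fun j => j = a) x) (rp (fun j => j <> a /\ P j) x).
  rewrite -rp_split; last by move=> j [h [h' _]].
  apply: rp_ext => j; split; first by move=> Pj; case: (classic (j = a)); auto.
  by case=> [->|[]].
rewrite Hql; try exact: rp_finsupp.
rewrite Hq' -/(fs a).
have Hna : ~ In a m' by move=> /Hs [].
case: m' Hn Hl Hs Hq' Hna => [|b [|c [|d m]]] Hn Hl Hs Hq' Hna /=.
- exists [:: a]; split; first by repeat constructor.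
  split => /=; first by auto.
  split; first by move=> j [<-|[]].
  by [].
- exists [:: a; b]; split.
    constructor => //; constructor => //; constructor.
  split => /=; first by auto.
  split; first by move=> j [<-|[<-|[]]] //; case: (Hs b) => /=; auto.
  by [].
- have Hb : b <> a /\ P b by apply: Hs; simpl; auto.
  have Hc : c <> a /\ P c by apply: Hs; simpl; auto.
  have Hbc : b <> c by inversion Hn; subst => E; subst; simpl in *; tauto.
  rewrite addr0.
  case: (three (fs a) (fs b) (fs c)) => [E|[E|[E|E]]]; rewrite E.
  + exists [:: a]; split; first by repeat constructor.
    split => /=; first by auto.
    split; first by move=> j [<-|[]].
    by rewrite addr0.
  + exists [:: a; b]; split.
      constructor; first by case=> [E'|[]]; apply: (proj1 Hb).
      constructor => //; constructor.
    split => /=; first by auto.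
    split; first by move=> j [<-|[<-|[]]] //; case: Hb.
    by rewrite addr0.
  + exists [:: a; c]; split.
      constructor; first by case=> [E'|[]]; apply: (proj1 Hc).
      constructor => //; constructor.
    split => /=; first by auto.
    split; first by move=> j [<-|[<-|[]]] //; case: Hc.
    by rewrite addr0.
  + exists [:: b; c]; split.
      constructor; first by case=> [E'|[]]; auto.
      constructor => //; constructor.
    split => /=; first by auto.
    split; first by move=> j [<-|[<-|[]]] //; [case: Hb|case: Hc].
    by rewrite addr0.
- by exfalso; simpl in Hl; lia.
Qed.

Lemma rp_all s : (forall i, x i <> 0 -> In i s) -> rp (fun j => In j s) x = x.
Proof.
move=> Hs; apply: functional_extensionality => j; rewrite /rp.
case: excluded_middle_informative => // h.
by apply: NNPP => h'; apply h; apply: Hs => E; apply: h'; rewrite E.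
Qed.

Hypothesis Hmin : q_minimal q x.

Lemma support_in m : NoDup m -> q x = sumf fs m -> forall j, x j <> 0 -> In j m.
Proof.
move=> Hn E.
have Hv : veq (rp (fun j => In j m) x) x.
  apply: NNPP => Hne; apply: Hmin.
  exists (rp (fun j => In j m) x); split; first exact: rp_finsupp.
  split; last by rewrite q_sum.
  split => //.
  exists (rp (fun j => ~ In j m) x); split; first exact: rp_finsupp.
  move=> j; rewrite /vadd /rp.
  by case: excluded_middle_informative => a; case: excluded_middle_informative => b;
    rewrite ?addr0 ?add0r //; exfalso; tauto.
move=> j hj; move: (Hv j); rewrite /rp.
case: excluded_middle_informative => // h1 h2. by exfalso; apply: hj; rewrite -h2.
Qed.

End Helpers.

Theorem corollary6p5 (R : comPzSemiRingType) (I : Type) (q : (I -> R) -> R) :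
  supertropical R ->
  quadratic_form q -> quasilinear q ->
  forall x : I -> R, finsupp x -> ~ veq x (fun _ => 0) ->
  q_minimal q x ->
  (tangible (q x) -> exists i : I, forall j : I, x j <> 0 <-> j = i) /\
  (ghost_nz (q x) ->
     exists i1 i2 : I, forall j : I, x j <> 0 -> j = i1 \/ j = i2).
Proof.
move=> Hst Hq Hql x Hx Hnz Hmin.
have Hx' := Hx; case: Hx' => s Hs.
have [m [Hn [Hl [_ E]]]] := @reduce R I q Hq Hql x Hx Hst s (fun j => In j s) (fun j Hj => Hj).
rewrite rp_all // in E.
have Hsup := @support_in R I q Hq Hql x Hx Hmin m Hn E.
have single : forall i, (forall j, x j <> 0 -> In j [:: i]) ->
    exists i0 : I, forall j : I, x j <> 0 <-> j = i0.
  move=> i Hi; exists i => j; split; first by move=> /Hi [<-|[]].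
  move=> ->; move=> h0; apply: Hnz => k; apply: NNPP => hk.
  by case: (Hi k hk) => [E'|[]]; subst; apply: hk.
split.
- move=> Ht.
  case: m Hn Hl E Hsup => [|a [|b [|c m]]] Hn Hl E Hsup.
  + by exfalso; apply: Ht; exists 0; rewrite E /= mulr0.
  + exact: (single a).
  + simpl in E; rewrite addr0 in E.
    have Hab : a <> b by inversion Hn; subst => E'; subst; simpl in *; tauto.
    rewrite E in Ht; case: (@two_tang R Hst _ _ Ht) => E2.
    * apply: (single a); apply: (@support_in R I q Hq Hql x Hx Hmin _).
        by repeat constructor.
      by rewrite /= addr0 E E2.
    * apply: (single b); apply: (@support_in R I q Hq Hql x Hx Hmin _).
        by repeat constructor.
      by rewrite /= addr0 E E2.
  + by exfalso; simpl in Hl; lia.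
- move=> _.
  case: m Hn Hl E Hsup => [|a [|b [|c m]]] Hn Hl E Hsup.
  + by exfalso; apply: Hnz => k; apply: NNPP => hk; case: (Hsup k hk).
  + by exists a, a => j /Hsup [<-|[]]; auto.
  + by exists a, b => j /Hsup [<-|[<-|[]]]; auto.
  + by exfalso; simpl in Hl; lia.
Qed.
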